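(* The functions $G_1(\zeta)=\sum_{n=0}^\infty A_n\zeta^{4+n}$ and $G_2(\zeta)=\sum_{n=0}^\infty B_n\zeta^{n-3}$ are two linearly independent solutions on the circle $\{|\zeta|=r\}$ of $G''+12Y_0G=0$, where $Y_0(\zeta)=-\zeta^{-2}+\zeta^2P(\zeta)$, and their Wronskian is $G_1G_2'-G_2G_1'=-7$.
   Context: $r=\tfrac{7}{10}$, $x_0=-\tfrac{770766}{323285}$; $a_0=-x_0/10$, $a_1=-1/6$, $a_2=\tfrac{19949}{321055}$, $a_3=0$, $a_n=-\tfrac{6}{(n+5)(n-2)}\sum_{k=0}^{n-4}a_ka_{n-4-k}$ for $4\le n\le17$, and $P(\zeta)=\sum_{n=0}^{17}a_n\zeta^n$. $A_0=1$, $A_1=A_2=A_3=0$, $A_n=-\tfrac{12}{n(n+7)}\sum_{k=0}^{\min\{n-4,17\}}a_kA_{n-4-k}$ ($n\ge4$); $B_0=1$, $B_1=B_2=B_3=B_7=0$, $B_n=-\tfrac{12}{n(n-7)}\sum_{k=0}^{\min\{n-4,17\}}a_kB_{n-4-k}$ ($n\ge4$, $n\neq7$). *)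

(* Defs.v *)
From Stdlib Require Import Reals List Arith.
From Coquelicot Require Import Coquelicot.
Import ListNotations.
Open Scope R_scope.

Definition r : R := 7 / 10.
Definition x0 : R := - (770766 / 323285).

(* a_0..a_17 by the stated recursion; a_n for n > 17 is never used. *)
Definition a_step (l : list R) (n : nat) : R :=
  match n with
  | 0%nat => - x0 / 10
  | 1%nat => - (1 / 6)
  | 2%nat => 19949 / 321055
  | 3%nat => 0
  | _ => - (6 / ((INR n + 5) * (INR n - 2))) *
         sum_f_R0 (fun k => nth k l 0 * nth (n - 4 - k) l 0) (n - 4)
  end.

Fixpoint a_list (n : nat) : list R :=
  match n with
  | 0%nat => [a_step [] 0]
  | S m => a_list m ++ [a_step (a_list m) (S m)]
  end.

Definition a (n : nat) : R := nth n (a_list n) 0.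

Definition A_step (l : list R) (n : nat) : R :=
  match n with
  | 0%nat => 1
  | 1%nat | 2%nat | 3%nat => 0
  | _ => - (12 / (INR n * (INR n + 7))) *
         sum_f_R0 (fun k => a k * nth (n - 4 - k) l 0) (Nat.min (n - 4) 17)
  end.

Fixpoint A_list (n : nat) : list R :=
  match n with
  | 0%nat => [A_step [] 0]
  | S m => A_list m ++ [A_step (A_list m) (S m)]
  end.

Definition A (n : nat) : R := nth n (A_list n) 0.

Definition B_step (l : list R) (n : nat) : R :=
  match n with
  | 0%nat => 1
  | 1%nat | 2%nat | 3%nat | 7%nat => 0
  | _ => - (12 / (INR n * (INR n - 7))) *
         sum_f_R0 (fun k => a k * nth (n - 4 - k) l 0) (Nat.min (n - 4) 17)
  end.

Fixpoint B_list (n : nat) : list R :=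
  match n with
  | 0%nat => [B_step [] 0]
  | S m => B_list m ++ [B_step (B_list m) (S m)]
  end.

Definition B (n : nat) : R := nth n (B_list n) 0.

Definition P (z : C) : C := sum_n (fun n => Cmult (RtoC (a n)) (Cpow z n)) 17.

Definition Y0 (z : C) : C :=
  Cplus (Copp (Cinv (Cpow z 2))) (Cmult (Cpow z 2) (P z)).

(* Terms of the two series; zeta^(n-3) (integer exponent) is written zeta^n / zeta^3. *)
Definition G1_term (z : C) (n : nat) : C := Cmult (RtoC (A n)) (Cpow z (4 + n)).
Definition G2_term (z : C) (n : nat) : C :=
  Cmult (RtoC (B n)) (Cdiv (Cpow z n) (Cpow z 3)).

Definition CSeries (u : nat -> C) : C :=
  (Series (fun n => fst (u n)), Series (fun n => snd (u n))).

Definition G1 (z : C) : C := CSeries (G1_term z).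
Definition G2 (z : C) : C := CSeries (G2_term z).

Definition solves_at (G : C -> C) (z : C) : Prop :=
  (exists eps : posreal, forall w : C, Cmod (Cminus w z) < eps ->
       @is_derive C_AbsRing C_NormedModule G w (C_derive G w)) /\
  @is_derive C_AbsRing C_NormedModule (C_derive G) z (C_derive (C_derive G) z) /\
  Cplus (C_derive (C_derive G) z) (Cmult (RtoC 12) (Cmult (Y0 z) (G z))) = RtoC 0.

(* Main.v *)
Require Import Defs.
From Stdlib Require Import Reals Lra Lia List.
From Coquelicot Require Import Coquelicot.
Open Scope R_scope.

Lemma sum_n_fst (u : nat -> C) n :
  sum_n (fun k => fst (u k)) n = fst (sum_n u n).
Proof.
  induction n.
  - rewrite !sum_O. reflexivity.
  - rewrite !sum_Sn, IHn. reflexivity.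
Qed.

Lemma sum_n_snd (u : nat -> C) n :
  sum_n (fun k => snd (u k)) n = snd (sum_n u n).
Proof.
  induction n.
  - rewrite !sum_O. reflexivity.
  - rewrite !sum_Sn, IHn. reflexivity.
Qed.

Lemma is_series_fst (u : nat -> C) (l : C) :
  @is_series C_AbsRing C_NormedModule u l -> is_series (fun n => fst (u n)) (fst l).
Proof.
  unfold is_series. intros H.
  apply filterlim_locally. intros eps.
  eapply filter_imp; [| exact (proj1 (filterlim_locally _ _) H eps)].
  intros n [H1 H2].
  rewrite sum_n_fst. exact H1.
Qed.

Lemma is_series_snd (u : nat -> C) (l : C) :
  @is_series C_AbsRing C_NormedModule u l -> is_series (fun n => snd (u n)) (snd l).
Proof.
  unfold is_series. intros H.
  apply filterlim_locally. intros eps.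
  eapply filter_imp; [| exact (proj1 (filterlim_locally _ _) H eps)].
  intros n [H1 H2].
  rewrite sum_n_snd. exact H2.
Qed.

Lemma CSeries_eq (u : nat -> C) (l : C) :
  @is_series C_AbsRing C_NormedModule u l -> CSeries u = l.
Proof.
  intros H. unfold CSeries.
  rewrite (is_series_unique _ _ (is_series_fst _ _ H)).
  rewrite (is_series_unique _ _ (is_series_snd _ _ H)).
  destruct l; reflexivity.
Qed.

Lemma is_series_C_unique (u : nat -> C) (l l' : C) :
  @is_series C_AbsRing C_NormedModule u l ->
  @is_series C_AbsRing C_NormedModule u l' -> l = l'.
Proof. intros H H'. rewrite <- (CSeries_eq _ _ H), <- (CSeries_eq _ _ H'). reflexivity. Qed.

Lemma is_series_norm_le (u : nat -> C) (l : C) (b : nat -> R) (B : R) :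
  @is_series C_AbsRing C_NormedModule u l ->
  (forall n, Cmod (u n) <= b n) -> is_series b B -> Cmod l <= B.
Proof.
  intros Hu Hb HB.
  assert (H1 : is_lim_seq (fun n => norm (sum_n u n)) (norm l)).
  { eapply filterlim_comp. exact Hu. apply filterlim_norm. }
  assert (H2 : forall n, norm (sum_n u n) <= sum_n b n).
  { intros n. eapply Rle_trans. unfold sum_n. exact (@norm_sum_n_m _ C_NormedModule u 0 n).
    unfold sum_n. apply sum_n_m_le. intros k. apply Hb. }
  pose proof (is_lim_seq_le _ _ _ _ H2 H1 (HB : is_lim_seq (sum_n b) B)) as H3. simpl in H3. exact H3.
Qed.

Lemma is_series_C0 : @is_series C_AbsRing C_NormedModule (fun _ => RtoC 0) (RtoC 0).
Proof.
  unfold is_series.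
  apply filterlim_ext with (fun _ => RtoC 0).
  - intros n. induction n.
    + rewrite sum_O. reflexivity.
    + rewrite sum_Sn, <- IHn. apply injective_projections; simpl; lra.
  - apply filterlim_const.
Qed.

Definition Ent (c : nat -> R) : Prop :=
  forall q, 0 < q -> exists M, 0 <= M /\ forall n, Rabs (c n) <= M * q ^ n.
Definition term (c : nat -> R) (z : C) (n : nat) : C := Cmult (RtoC (c n)) (Cpow z n).
Definition PS (c : nat -> R) (z : C) : C := CSeries (term c z).
Definition dc (c : nat -> R) (n : nat) : R := INR (S n) * c (S n).

Lemma INR_S_le_pow2 n : INR (S n) <= 2 ^ n.
Proof.
  induction n.
  - simpl. lra.
  - rewrite S_INR. assert (1 <= 2 ^ n) by (apply pow_R1_Rle; lra).
    change (2 ^ S n) with (2 * 2 ^ n). lra.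
Qed.

Lemma Cmod_term c z n : Cmod (term c z n) = Rabs (c n) * Cmod z ^ n.
Proof. unfold term. rewrite Cmod_mult, Cmod_R, Cmod_pow. reflexivity. Qed.

Lemma Ent_series c z : Ent c -> @is_series C_AbsRing C_NormedModule (term c z) (PS c z).
Proof.
  intros Hc.
  set (q := / (2 * (Cmod z + 1))).
  assert (Hz := Cmod_ge_0 z).
  assert (Hq : 0 < q) by (unfold q; apply Rinv_0_lt_compat; lra).
  destruct (Hc q Hq) as [M [HM HMb]].
  assert (Hqz : 0 <= q * Cmod z < 1 / 2).
  { assert (Hq1 : q * (2 * (Cmod z + 1)) = 1) by (unfold q; field; lra).
    split. apply Rmult_le_pos; lra. nra. }
  assert (Hex : ex_series (fun n => M * (q * Cmod z) ^ n)).
  { apply (@ex_series_scal R_AbsRing R_NormedModule M (fun n => (q * Cmod z) ^ n)).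
    apply ex_series_geom. rewrite Rabs_pos_eq; lra. }
  assert (Hb : forall n, @norm C_AbsRing C_CompleteNormedModule (term c z n) <= M * (q * Cmod z) ^ n).
  { intros n. change (Cmod (term c z n) <= M * (q * Cmod z) ^ n).
    rewrite Cmod_term, Rpow_mult_distr, <- Rmult_assoc.
    apply Rmult_le_compat_r. apply pow_le; lra. apply HMb. }
  destruct (@ex_series_le C_AbsRing C_CompleteNormedModule (term c z) _ Hb Hex)
    as [l Hl].
  unfold PS. rewrite (CSeries_eq _ _ Hl). exact Hl.
Qed.

Lemma Ent_dc c : Ent c -> Ent (dc c).
Proof.
  intros Hc q Hq.
  destruct (Hc (q / 2)) as [M [HM HMb]]. lra.
  exists (M * (q / 2)). split. apply Rmult_le_pos; lra.
  intros n. unfold dc. rewrite Rabs_mult, Rabs_pos_eq by apply pos_INR.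
  eapply Rle_trans. apply Rmult_le_compat_l. apply pos_INR. apply HMb.
  eapply Rle_trans. apply Rmult_le_compat_r.
  apply Rmult_le_pos; [lra| apply pow_le; lra]. apply INR_S_le_pow2.
  replace (q ^ n) with (2 ^ n * (q / 2) ^ n)
    by (rewrite <- Rpow_mult_distr; f_equal; field).
  change ((q / 2) ^ S n) with ((q / 2) * (q / 2) ^ n). right; ring.
Qed.

Lemma Ent_abs c rho : Ent c -> 0 < rho ->
  ex_series (fun n => Rabs (c (S n)) * INR (S n) ^ 2 * rho ^ n).
Proof.
  intros Hc Hr.
  set (q := / (8 * rho)).
  assert (Hq : 0 < q) by (unfold q; apply Rinv_0_lt_compat; lra).
  destruct (Hc q Hq) as [M [HM HMb]].
  apply (@ex_series_le R_AbsRing R_CompleteNormedModule _ (fun n => (M * q) * (/2) ^ n)).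
  - intros n. change (Rabs (Rabs (c (S n)) * INR (S n) ^ 2 * rho ^ n) <= M * q * (/ 2) ^ n).
    rewrite Rabs_pos_eq.
    2:{ apply Rmult_le_pos. apply Rmult_le_pos. apply Rabs_pos. apply pow_le, pos_INR.
        apply pow_le; lra. }
    assert (H1 : INR (S n) ^ 2 <= 4 ^ n).
    { replace (INR (S n) ^ 2) with (INR (S n) * INR (S n)) by ring.
      replace (4 ^ n) with (2 ^ n * 2 ^ n)
        by (rewrite <- Rpow_mult_distr; f_equal; lra).
      pose proof (INR_S_le_pow2 n). pose proof (pos_INR (S n)).
      apply Rmult_le_compat; lra. }
    assert (H2 : Rabs (c (S n)) <= M * q * q ^ n) by (rewrite Rmult_assoc; apply HMb).
    assert (H3 : / 2 = 4 * q * rho) by (unfold q; field; lra).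
    rewrite H3, !Rpow_mult_distr.
    assert (0 <= q ^ n) by (apply pow_le; lra).
    assert (0 <= rho ^ n) by (apply pow_le; lra).
    assert (0 <= INR (S n) ^ 2) by (apply pow_le, pos_INR).
    assert (0 <= M * q * q ^ n) by (apply Rmult_le_pos; [apply Rmult_le_pos|]; lra).
    apply Rmult_le_compat_r with (r := rho ^ n) in H1; auto.
    apply Rle_trans with (M * q * q ^ n * (INR (S n) ^ 2 * rho ^ n)).
    + rewrite Rmult_assoc. apply Rmult_le_compat_r. apply Rmult_le_pos; auto. exact H2.
    + apply Rle_trans with (M * q * q ^ n * (4 ^ n * rho ^ n)).
      * apply Rmult_le_compat_l; auto.
      * right. ring.
  - apply (@ex_series_scal R_AbsRing R_NormedModule (M * q) (fun n => (/ 2) ^ n)).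
    apply ex_series_geom. rewrite Rabs_pos_eq; lra.
Qed.

Definition Eterm (w z : C) (n : nat) : C :=
  Cminus (Cminus (Cpow w (S n)) (Cpow z (S n)))
         (Cmult (Cmult (RtoC (INR (S n))) (Cpow z n)) (Cminus w z)).

Lemma Eterm_S w z n :
  Eterm w z (S n) = Cplus (Cmult w (Eterm w z n))
     (Cmult (Cmult (RtoC (INR (S n))) (Cpow z n)) (Cmult (Cminus w z) (Cminus w z))).
Proof.
  unfold Eterm. rewrite (S_INR (S n)), RtoC_plus.
  change (Cpow w (S (S n))) with (Cmult w (Cpow w (S n))).
  change (Cpow z (S (S n))) with (Cmult z (Cpow z (S n))).
  change (Cpow w (S n)) with (Cmult w (Cpow w n)).
  change (Cpow z (S n)) with (Cmult z (Cpow z n)).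
  ring.
Qed.

Lemma Eterm_0 w z : Eterm w z 0 = RtoC 0.
Proof. unfold Eterm. simpl Cpow. change (INR 1) with 1. ring. Qed.

Lemma Eterm_bound w z rho n : 1 <= rho -> Cmod w <= rho -> Cmod z <= rho ->
  Cmod (Eterm w z n) <= INR (S n) ^ 2 * rho ^ n * (Cmod (Cminus w z) ^ 2).
Proof.
  intros Hr Hw Hz.
  set (d := Cmod (Cminus w z)).
  assert (Hd : 0 <= d) by apply Cmod_ge_0.
  induction n.
  - rewrite Eterm_0, Cmod_0. simpl. nra.
  - rewrite Eterm_S.
    eapply Rle_trans. apply Cmod_triangle.
    rewrite !Cmod_mult, Cmod_R, Rabs_pos_eq, Cmod_pow by apply pos_INR.
    fold d.
    assert (H0 : 0 <= Cmod (Eterm w z n)) by apply Cmod_ge_0.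
    assert (H1 : Cmod z ^ n <= rho ^ n) by (apply pow_incr; split; [apply Cmod_ge_0| exact Hz]).
    assert (H2 : rho ^ n <= rho ^ S n) by (apply Rle_pow; [lra| lia]).
    assert (H3 : 0 <= rho ^ n) by (apply pow_le; lra).
    assert (H4 : 0 <= Cmod z ^ n) by (apply pow_le, Cmod_ge_0).
    pose proof (pos_INR (S n)) as H5.
    rewrite (S_INR (S n)).
    change (rho ^ S n) with (rho * rho ^ n) in *.
    assert (Ha : Cmod w * Cmod (Eterm w z n) <= rho * (INR (S n) ^ 2 * rho ^ n * d ^ 2)).
    { apply Rmult_le_compat; auto. apply Cmod_ge_0. }
    assert (Hb : INR (S n) * Cmod z ^ n * (d * d) <= INR (S n) * (rho * rho ^ n) * (d * d)).
    { apply Rmult_le_compat_r. nra. apply Rmult_le_compat_l; lra. }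
    assert (Hc : 0 <= INR (S n) * (rho * rho ^ n) * (d * d)) by (apply Rmult_le_pos; nra).
    set (k := INR (S n)) in *. set (X := Cmod w * Cmod (Eterm w z n)) in *.
    set (Y := k * Cmod z ^ n * (d * d)) in *.
    set (p := rho ^ n) in *.
    assert (0 <= rho * p * (d * d)) by (apply Rmult_le_pos; nra).
    replace ((k + 1) ^ 2 * (rho * p) * d ^ 2) with ((k * k + 2 * k + 1) * (rho * p * (d * d))) by ring.
    replace (rho * (k ^ 2 * p * d ^ 2)) with (k * k * (rho * p * (d * d))) in Ha by ring.
    replace (k * (rho * p) * (d * d)) with (k * (rho * p * (d * d))) in Hb by ring.
    nra.
Qed.

Lemma is_series_shift (u : nat -> C) (l : C) :
  @is_series C_AbsRing C_NormedModule u l ->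
  @is_series C_AbsRing C_NormedModule (fun n => u (S n)) (Cminus l (u O)).
Proof.
  intros H. apply is_series_incr_1.
  refine (eq_ind l (fun l' => @is_series C_AbsRing C_NormedModule u l') H _ _).
  change (l = Cplus (Cminus l (u O)) (u O)). ring.
Qed.

Lemma is_series_Cmult_l (u : nat -> C) l k :
  @is_series C_AbsRing C_NormedModule u l ->
  @is_series C_AbsRing C_NormedModule (fun n => Cmult k (u n)) (Cmult k l).
Proof. intros H. exact (@is_series_scal C_AbsRing C_NormedModule k u l H). Qed.

Lemma is_series_Cminus (u v : nat -> C) lu lv :
  @is_series C_AbsRing C_NormedModule u lu ->
  @is_series C_AbsRing C_NormedModule v lv ->
  @is_series C_AbsRing C_NormedModule (fun n => Cminus (u n) (v n)) (Cminus lu lv).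
Proof. intros H1 H2. exact (@is_series_minus C_AbsRing C_NormedModule u v lu lv H1 H2). Qed.

Lemma is_series_Cplus (u v : nat -> C) lu lv :
  @is_series C_AbsRing C_NormedModule u lu ->
  @is_series C_AbsRing C_NormedModule v lv ->
  @is_series C_AbsRing C_NormedModule (fun n => Cplus (u n) (v n)) (Cplus lu lv).
Proof. intros H1 H2. exact (@is_series_plus C_AbsRing C_NormedModule u v lu lv H1 H2). Qed.

Lemma PS_derive c z : Ent c -> @is_derive C_AbsRing C_NormedModule (PS c) z (PS (dc c) z).
Proof.
  intros Hc. split. apply is_linear_scal_l.
  intros x Hx. apply (@is_filter_lim_locally_unique C_AbsRing (AbsRing_NormedModule C_AbsRing)) in Hx. subst x.
  intros eps.
  set (rho := Cmod z + 1).
  assert (Hz0 := Cmod_ge_0 z).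
  destruct (Ent_abs c rho Hc) as [K HK]. unfold rho; lra.
  set (K1 := Rabs K + 1).
  assert (HK1 : 0 < K1) by (unfold K1; pose proof (Rabs_pos K); lra).
  assert (Hdel : 0 < Rmin 1 (eps / K1)).
  { apply Rmin_pos. lra. apply Rdiv_lt_0_compat. apply cond_pos. exact HK1. }
  exists (mkposreal _ Hdel). intros w Hw.
  change (Cmod (Cminus w z) < Rmin 1 (eps / K1)) in Hw.
  change (Cmod (Cminus (Cminus (PS c w) (PS c z)) (Cmult (Cminus w z) (PS (dc c) z)))
          <= eps * Cmod (Cminus w z)).
  set (d := Cmod (Cminus w z)) in *.
  assert (Hd0 : 0 <= d) by apply Cmod_ge_0.
  assert (Hd1 : d < 1) by (eapply Rlt_le_trans; [exact Hw| apply Rmin_l]).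
  assert (Hd2 : d <= eps / K1) by (left; eapply Rlt_le_trans; [exact Hw| apply Rmin_r]).
  assert (Hwr : Cmod w <= rho).
  { replace w with (Cplus z (Cminus w z)) by ring.
    eapply Rle_trans. apply Cmod_triangle. fold d. unfold rho. lra. }
  assert (Hser : @is_series C_AbsRing C_NormedModule
     (fun n => Cmult (RtoC (c (S n))) (Eterm w z n))
     (Cminus (Cminus (PS c w) (PS c z)) (Cmult (Cminus w z) (PS (dc c) z)))).
  { pose proof (is_series_shift _ _ (Ent_series c w Hc)) as H1.
    pose proof (is_series_shift _ _ (Ent_series c z Hc)) as H2.
    pose proof (is_series_Cmult_l _ _ (Cminus w z) (Ent_series (dc c) z (Ent_dc c Hc))) as H3.
    pose proof (is_series_Cminus _ _ _ _ (is_series_Cminus _ _ _ _ H1 H2) H3) as H4.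
    eapply is_series_ext; [| replace (Cminus (Cminus (PS c w) (PS c z)) (Cmult (Cminus w z) (PS (dc c) z)))
       with (Cminus (Cminus (Cminus (PS c w) (term c w 0)) (Cminus (PS c z) (term c z 0)))
              (Cmult (Cminus w z) (PS (dc c) z))); [exact H4|] ].
    - intros n. simpl. unfold term, dc, Eterm. rewrite RtoC_mult.
      change (Cpow w (S n)) with (Cmult w (Cpow w n)).
      change (Cpow z (S n)) with (Cmult z (Cpow z n)). ring.
    - unfold term. simpl Cpow. ring. }
  assert (Hb : forall n, Cmod (Cmult (RtoC (c (S n))) (Eterm w z n)) <=
     (Rabs (c (S n)) * INR (S n) ^ 2 * rho ^ n) * d ^ 2).
  { intros n. rewrite Cmod_mult, Cmod_R.
    replace (Rabs (c (S n)) * INR (S n) ^ 2 * rho ^ n * d ^ 2)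
      with (Rabs (c (S n)) * (INR (S n) ^ 2 * rho ^ n * d ^ 2)) by ring.
    apply Rmult_le_compat_l. apply Rabs_pos. apply Eterm_bound.
    unfold rho; lra. exact Hwr. unfold rho; lra. }
  pose proof (is_series_norm_le _ _ _ _ Hser Hb (is_series_scal_r _ _ _ HK)) as Hle.
  eapply Rle_trans. exact Hle.
  assert (HKK : K <= K1) by (unfold K1; pose proof (Rle_abs K); lra).
  assert (K * d ^ 2 <= K1 * d * d) by (simpl; nra).
  assert (K1 * d <= eps).
  { apply (Rmult_le_compat_l K1) in Hd2; [| lra].
    replace (K1 * (eps / K1)) with (pos eps) in Hd2 by (field; lra). exact Hd2. }
  nra.
Qed.

Definition shift1 (c : nat -> R) (n : nat) : R :=
  match n with O => 0 | S m => c m end.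
Definition shiftk (k : nat) (c : nat -> R) (n : nat) : R :=
  if Nat.leb k n then c (n - k)%nat else 0.
Definition convN (N : nat) (c : nat -> R) (n : nat) : R :=
  sum_f_R0 (fun k => if Nat.leb k n then a k * c (n - k)%nat else 0) N.

Lemma Ent_ext c d : (forall n, c n = d n) -> Ent c -> Ent d.
Proof. intros E Hc q Hq. destruct (Hc q Hq) as [M [HM H]]. exists M. split; auto.
  intros n. rewrite <- E. auto. Qed.

Lemma Ent_plus c d : Ent c -> Ent d -> Ent (fun n => c n + d n).
Proof.
  intros Hc Hd q Hq. destruct (Hc q Hq) as [M1 [HM1 H1]]. destruct (Hd q Hq) as [M2 [HM2 H2]].
  exists (M1 + M2). split. lra. intros n.
  eapply Rle_trans. apply Rabs_triang. specialize (H1 n). specialize (H2 n). lra.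
Qed.

Lemma Ent_scal k c : Ent c -> Ent (fun n => k * c n).
Proof.
  intros Hc q Hq. destruct (Hc q Hq) as [M [HM H]].
  exists (Rabs k * M). split. apply Rmult_le_pos; auto; apply Rabs_pos. intros n.
  rewrite Rabs_mult, Rmult_assoc. apply Rmult_le_compat_l. apply Rabs_pos. auto.
Qed.

Lemma Ent_shift1 c : Ent c -> Ent (shift1 c).
Proof.
  intros Hc q Hq. destruct (Hc q Hq) as [M [HM H]].
  exists (M / q). split. apply Rdiv_le_0_compat; lra. intros [|n]; simpl.
  - rewrite Rabs_R0. apply Rmult_le_pos. apply Rdiv_le_0_compat; lra. lra.
  - eapply Rle_trans. apply H. right. field. lra.
Qed.

Lemma shiftk_S k c n : shiftk (S k) c n = shift1 (shiftk k c) n.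
Proof.
  unfold shiftk, shift1. destruct n as [|n]. reflexivity.
  simpl. destruct (Nat.leb k n); reflexivity.
Qed.

Lemma Ent_shiftk k c : Ent c -> Ent (shiftk k c).
Proof.
  intros Hc. induction k.
  - apply (Ent_ext c). intros n. unfold shiftk. simpl. rewrite Nat.sub_0_r. reflexivity. auto.
  - apply (Ent_ext (shift1 (shiftk k c))). intros n. rewrite shiftk_S. reflexivity.
    apply Ent_shift1. auto.
Qed.

Lemma convN_S N c n : convN (S N) c n = convN N c n + a (S N) * shiftk (S N) c n.
Proof.
  unfold convN. rewrite tech5. unfold shiftk.
  destruct (Nat.leb (S N) n); ring.
Qed.

Lemma Ent_convN N c : Ent c -> Ent (convN N c).
Proof.
  intros Hc. induction N.
  - apply (Ent_ext (fun n => a 0 * c n)). intros n. unfold convN. simpl. rewrite Nat.sub_0_r. reflexivity.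
    apply Ent_scal; auto.
  - apply (Ent_ext (fun n => convN N c n + a (S N) * shiftk (S N) c n)).
    intros n. rewrite convN_S. reflexivity.
    apply Ent_plus; auto. apply Ent_scal. apply Ent_shiftk. auto.
Qed.

Lemma PS_ext c d z : (forall n, c n = d n) -> PS c z = PS d z.
Proof.
  intros E. unfold PS, CSeries, term. f_equal; apply Series_ext; intros n; rewrite E; reflexivity.
Qed.

Lemma PS_plus c d z : Ent c -> Ent d -> PS (fun n => c n + d n) z = Cplus (PS c z) (PS d z).
Proof.
  intros Hc Hd. apply CSeries_eq.
  eapply is_series_ext; [| exact (is_series_Cplus _ _ _ _ (Ent_series c z Hc) (Ent_series d z Hd))].
  intros n. change (Cplus (term c z n) (term d z n) = term (fun n => c n + d n) z n).
  unfold term. rewrite RtoC_plus. ring.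
Qed.

Lemma PS_scal k c z : Ent c -> PS (fun n => k * c n) z = Cmult (RtoC k) (PS c z).
Proof.
  intros Hc. apply CSeries_eq.
  eapply is_series_ext; [| exact (is_series_Cmult_l _ _ (RtoC k) (Ent_series c z Hc))].
  intros n. change (Cmult (RtoC k) (term c z n) = term (fun n => k * c n) z n).
  unfold term. rewrite RtoC_mult. ring.
Qed.

Lemma PS_shift1 c z : Ent c -> PS (shift1 c) z = Cmult z (PS c z).
Proof.
  intros Hc. apply CSeries_eq. apply is_series_decr_1.
  eapply is_series_ext; [| refine (eq_ind _ (fun l => @is_series C_AbsRing C_NormedModule _ l)
       (is_series_Cmult_l _ _ z (Ent_series c z Hc)) _ _)].
  - intros n. change (Cmult z (term c z n) = term (shift1 c) z (S n)).
    unfold term. simpl. ring.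
  - unfold term. simpl. change (Cmult z (PS c z) = Cplus (Cmult z (PS c z)) (Copp (Cmult (RtoC 0) (RtoC 1)))).
    ring.
Qed.

Lemma PS_shiftk k c z : Ent c -> PS (shiftk k c) z = Cmult (Cpow z k) (PS c z).
Proof.
  intros Hc. induction k.
  - simpl. rewrite (PS_ext _ c). ring. intros n. unfold shiftk. simpl. rewrite Nat.sub_0_r. reflexivity.
  - rewrite (PS_ext _ (shift1 (shiftk k c))) by (intros; apply shiftk_S).
    rewrite PS_shift1 by (apply Ent_shiftk; auto). rewrite IHk. simpl. ring.
Qed.

Lemma PS_convN N c z : Ent c ->
  Cmult (sum_n (fun n => Cmult (RtoC (a n)) (Cpow z n)) N) (PS c z) = PS (convN N c) z.
Proof.
  intros Hc. induction N.
  - rewrite sum_O. rewrite (PS_ext (convN 0 c) (fun n => a 0 * c n)).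
    rewrite PS_scal by auto. change (Cpow z 0) with (RtoC 1). ring.
    intros n. unfold convN. simpl. rewrite Nat.sub_0_r. reflexivity.
  - rewrite sum_Sn. rewrite (PS_ext (convN (S N) c) (fun n => convN N c n + a (S N) * shiftk (S N) c n))
      by (intros; apply convN_S).
    rewrite PS_plus, PS_scal, PS_shiftk, <- IHN.
    change (plus ?x ?y) with (Cplus x y). ring.
    all: try apply Ent_convN; try apply Ent_scal; try apply Ent_shiftk; auto.
Qed.

Lemma PS_zero c z : (forall n, c n = 0) -> PS c z = RtoC 0.
Proof.
  intros H. apply CSeries_eq. eapply is_series_ext; [| exact is_series_C0].
  intros n. change (RtoC 0 = term c z n). unfold term. rewrite H. ring.
Qed.

Lemma PS_at0 c : Ent c -> PS c (RtoC 0) = RtoC (c O).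
Proof.
  intros Hc. apply CSeries_eq. apply is_series_decr_1.
  eapply is_series_ext; [| refine (eq_ind _ (fun l => @is_series C_AbsRing C_NormedModule _ l)
       is_series_C0 _ _)].
  - intros n. change (RtoC 0 = term c (RtoC 0) (S n)). unfold term. simpl. ring.
  - unfold term. simpl. change (RtoC 0 = Cplus (RtoC (c O)) (Copp (Cmult (RtoC (c O)) (RtoC 1)))).
    ring.
Qed.

Lemma ode_id c (al : R) z : Ent c ->
  (forall n, INR (S n) * (INR n + al) * c (S n) + 12 * shiftk 3 (convN 17 c) n = 0) ->
  Cplus (Cplus (Cmult (RtoC al) (PS (dc c) z)) (Cmult z (PS (dc (dc c)) z)))
        (Cmult (RtoC 12) (Cmult (Cpow z 3) (Cmult (P z) (PS c z)))) = RtoC 0.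
Proof.
  intros Hc Hrec. unfold P.
  rewrite PS_convN, <- PS_shiftk, <- PS_shift1, <- !PS_scal, <- !PS_plus.
  apply PS_zero. intros n. rewrite <- (Hrec n).
  unfold shift1, dc. destruct n as [|m].
  - simpl. ring.
  - rewrite (S_INR (S m)). ring.
  all: repeat first [assumption | apply Ent_dc | apply Ent_convN | apply Ent_shiftk
                    | apply Ent_shift1 | apply Ent_scal | apply Ent_plus].
Qed.

Lemma A_list_length m : length (A_list m) = S m.
Proof. induction m; simpl; auto. rewrite length_app, IHm. simpl. lia. Qed.
Lemma B_list_length m : length (B_list m) = S m.
Proof. induction m; simpl; auto. rewrite length_app, IHm. simpl. lia. Qed.

Lemma A_list_nth m i : (i <= m)%nat -> nth i (A_list m) 0 = A i.
Proof.
  intros H. unfold A. induction m.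
  - assert (i = 0%nat) by lia. subst. reflexivity.
  - destruct (Nat.eq_dec i (S m)). subst. reflexivity.
    simpl. rewrite app_nth1 by (rewrite A_list_length; lia). apply IHm. lia.
Qed.
Lemma B_list_nth m i : (i <= m)%nat -> nth i (B_list m) 0 = B i.
Proof.
  intros H. unfold B. induction m.
  - assert (i = 0%nat) by lia. subst. reflexivity.
  - destruct (Nat.eq_dec i (S m)). subst. reflexivity.
    simpl. rewrite app_nth1 by (rewrite B_list_length; lia). apply IHm. lia.
Qed.

Lemma A_S m : A (S m) = A_step (A_list m) (S m).
Proof. unfold A. simpl. rewrite app_nth2 by (rewrite A_list_length; lia).
  rewrite A_list_length, Nat.sub_diag. reflexivity. Qed.
Lemma B_S m : B (S m) = B_step (B_list m) (S m).
Proof. unfold B. simpl. rewrite app_nth2 by (rewrite B_list_length; lia).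
  rewrite B_list_length, Nat.sub_diag. reflexivity. Qed.

Lemma A_rec p : let n := (4 + p)%nat in
  A n = - (12 / (INR n * (INR n + 7))) *
        sum_f_R0 (fun k => a k * A (n - 4 - k)%nat) (Nat.min (n - 4) 17).
Proof.
  intros n. unfold n. change (4 + p)%nat with (S (3 + p)). rewrite A_S.
  change (A_step (A_list (3 + p)) (S (3 + p))) with
    (- (12 / (INR (S (3 + p)) * (INR (S (3 + p)) + 7))) *
         sum_f_R0 (fun k => a k * nth (S (3 + p) - 4 - k) (A_list (3 + p)) 0) (Nat.min (S (3 + p) - 4) 17)).
  f_equal. apply sum_eq. intros i Hi. rewrite A_list_nth. reflexivity. lia.
Qed.

Lemma B_rec p : let n := (4 + p)%nat in n <> 7%nat ->
  B n = - (12 / (INR n * (INR n - 7))) *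
        sum_f_R0 (fun k => a k * B (n - 4 - k)%nat) (Nat.min (n - 4) 17).
Proof.
  intros n Hn. unfold n in *. change (4 + p)%nat with (S (3 + p)). rewrite B_S.
  destruct p as [|[|[|[|p]]]]; [ | | | exfalso; apply Hn; reflexivity | ];
  (match goal with |- B_step _ ?m = _ =>
    change (B_step (B_list (3 + _)) m) with
    (- (12 / (INR m * (INR m - 7))) *
         sum_f_R0 (fun k => a k * nth (m - 4 - k) (B_list (pred m)) 0) (Nat.min (m - 4) 17)) end);
  f_equal; apply sum_eq; intros i Hi; rewrite B_list_nth; try reflexivity.
  clear. change (Init.Nat.pred (S (3 + S (S (S (S p)))))) with (3 + S (S (S (S p))))%nat. lia.
Qed.

Lemma sum_trunc (g : nat -> R) m N :
  sum_f_R0 (fun k => if Nat.leb k m then g k else 0) N = sum_f_R0 g (Nat.min m N).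
Proof.
  induction N.
  - rewrite Nat.min_0_r. simpl. reflexivity.
  - rewrite tech5, IHN. destruct (Nat.leb (S N) m) eqn:E.
    + apply Nat.leb_le in E. rewrite !Nat.min_r by lia. rewrite tech5. reflexivity.
    + apply Nat.leb_gt in E. rewrite !Nat.min_l by lia. ring.
Qed.

Lemma sum_term_le (f : nat -> R) i N : (forall k, 0 <= f k) -> (i <= N)%nat -> f i <= sum_f_R0 f N.
Proof.
  intros Hf Hi. induction N.
  - assert (i = 0%nat) by lia. subst. simpl. lra.
  - rewrite tech5. destruct (Nat.eq_dec i (S N)).
    + subst. pose proof (cond_pos_sum f N Hf). lra.
    + specialize (IHN ltac:(lia)). specialize (Hf (S N)). lra.
Qed.

Lemma sum_le_more (f : nat -> R) m N : (forall k, 0 <= f k) -> (m <= N)%nat ->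
  sum_f_R0 f m <= sum_f_R0 f N.
Proof.
  intros Hf Hm. induction N.
  - assert (m = 0%nat) by lia. subst. lra.
  - destruct (Nat.eq_dec m (S N)). subst. lra.
    rewrite tech5. specialize (IHN ltac:(lia)). specialize (Hf (S N)). lra.
Qed.

Lemma pow_decr_le (q : R) m p : 0 <= q <= 1 -> (p <= m)%nat -> q ^ m <= q ^ p.
Proof.
  intros Hq Hpm. replace m with (p + (m - p))%nat by lia. rewrite pow_add.
  assert (0 <= q ^ p) by (apply pow_le; lra).
  assert (q ^ (m - p) <= 1) by (rewrite <- (pow1 (m - p)); apply pow_incr; lra).
  assert (0 <= q ^ (m - p)) by (apply pow_le; lra). nra.
Qed.

Lemma Ent_rec (x : nat -> R) (K : R) (N0 : nat) : 0 <= K -> (4 <= N0)%nat ->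
  (forall n, (N0 <= n)%nat -> Rabs (x n) <=
     K / INR n * sum_f_R0 (fun k => Rabs (a k) * Rabs (x (n - 4 - k)%nat)) (Nat.min (n - 4) 17)) ->
  Ent x.
Proof.
  intros HK HN0 Hrec q Hq.
  set (q' := Rmin q 1).
  assert (Hq' : 0 < q' <= 1) by (unfold q'; split; [apply Rmin_pos; lra | apply Rmin_r]).
  assert (Hqq : q' <= q) by apply Rmin_l.
  set (S := sum_f_R0 (fun k => Rabs (a k)) 17).
  assert (HS : 0 <= S) by (apply cond_pos_sum; intros; apply Rabs_pos).
  assert (Hq21 : 0 < q' ^ 21) by (apply pow_lt; lra).
  set (T := K * S / q' ^ 21).
  assert (HT : 0 <= T) by (unfold T; apply Rdiv_le_0_compat; [apply Rmult_le_pos|]; lra).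
  destruct (nfloor_ex T HT) as [N1' HN1'].
  set (N1 := (N1' + 1 + N0)%nat).
  assert (HN1 : T <= INR N1).
  { unfold N1. rewrite !plus_INR. simpl INR. pose proof (pos_INR N0). lra. }
  set (M := sum_f_R0 (fun n => Rabs (x n) / q' ^ n) N1).
  assert (HM : 0 <= M).
  { apply cond_pos_sum. intros k. apply Rdiv_le_0_compat. apply Rabs_pos. apply pow_lt; lra. }
  assert (Hmain : forall n m, (m <= n)%nat -> Rabs (x m) <= M * q' ^ m).
  { induction n.
    - intros m Hm. assert (m = 0%nat) by lia. subst.
      assert (H0 : Rabs (x 0%nat) / q' ^ 0 <= M).
      { apply (sum_term_le (fun n => Rabs (x n) / q' ^ n)). intros; apply Rdiv_le_0_compat.
        apply Rabs_pos. apply pow_lt; lra. lia. }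
      simpl in *. lra.
    - intros m Hm. destruct (Nat.le_gt_cases m N1) as [Hle | Hgt].
      + assert (H0 : Rabs (x m) / q' ^ m <= M).
        { apply (sum_term_le (fun n => Rabs (x n) / q' ^ n)). intros; apply Rdiv_le_0_compat.
          apply Rabs_pos. apply pow_lt; lra. lia. }
        assert (0 < q' ^ m) by (apply pow_lt; lra).
        apply (Rmult_le_compat_r (q' ^ m)) in H0; [| lra].
        replace (Rabs (x m) / q' ^ m * q' ^ m) with (Rabs (x m)) in H0 by (field; lra). exact H0.
      + assert (HmN0 : (N0 <= m)%nat) by (unfold N1 in Hgt; lia).
        eapply Rle_trans. apply Hrec. exact HmN0.
        assert (Hsum : sum_f_R0 (fun k => Rabs (a k) * Rabs (x (m - 4 - k)%nat)) (Nat.min (m - 4) 17)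
                  <= (M * q' ^ m / q' ^ 21) * S).
        { eapply Rle_trans with (sum_f_R0 (fun k => Rabs (a k) * (M * q' ^ m / q' ^ 21)) (Nat.min (m - 4) 17)).
          - apply sum_Rle. intros k Hk. apply Rmult_le_compat_l. apply Rabs_pos.
            eapply Rle_trans. apply IHn. lia.
            assert (Hp : q' ^ 21 <= q' ^ (4 + k)) by (apply pow_decr_le; [lra | lia]).
            assert (Hp2 : q' ^ m = q' ^ (m - 4 - k) * q' ^ (4 + k)).
            { rewrite <- pow_add. f_equal. lia. }
            rewrite Hp2. unfold Rdiv.
            assert (0 <= q' ^ (m - 4 - k)) by (apply pow_le; lra).
            assert (0 < q' ^ (4 + k)) by (apply pow_lt; lra).
            assert (Hab : q' ^ (m - 4 - k) <= q' ^ (m - 4 - k) * q' ^ (4 + k) * / q' ^ 21).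
            { apply (Rmult_le_reg_r (q' ^ 21)); [lra|].
              replace (q' ^ (m - 4 - k) * q' ^ (4 + k) * / q' ^ 21 * q' ^ 21)
                with (q' ^ (m - 4 - k) * q' ^ (4 + k)) by (field; lra). nra. }
            replace (M * (q' ^ (m - 4 - k) * q' ^ (4 + k)) * / q' ^ 21)
              with (M * (q' ^ (m - 4 - k) * q' ^ (4 + k) * / q' ^ 21)) by ring.
            apply Rmult_le_compat_l; lra.
          - rewrite <- scal_sum. apply Rmult_le_compat_l.
            apply Rdiv_le_0_compat. apply Rmult_le_pos; [lra| apply pow_le; lra]. lra.
            apply sum_le_more. intros; apply Rabs_pos. lia. }
        assert (Hm0 : 0 < INR m).
        { apply lt_0_INR. lia. }
        assert (HmT : T <= INR m).
        { eapply Rle_trans. exact HN1. apply le_INR. lia. }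
        assert (HKm : 0 <= K / INR m) by (apply Rdiv_le_0_compat; lra).
        eapply Rle_trans. apply Rmult_le_compat_l. exact HKm. exact Hsum.
        replace (K / INR m * (M * q' ^ m / q' ^ 21 * S)) with ((T / INR m) * (M * q' ^ m))
          by (unfold T; field; lra).
        assert (0 <= M * q' ^ m) by (apply Rmult_le_pos; [lra| apply pow_le; lra]).
        assert (T / INR m <= 1).
        { apply (Rmult_le_reg_r (INR m)). lra. replace (T / INR m * INR m) with T by (field; lra). lra. }
        nra. }
  exists M. split. exact HM. intros n.
  eapply Rle_trans. apply (Hmain n n). lia.
  apply Rmult_le_compat_l. exact HM. apply pow_incr. lra.
Qed.

Lemma rec_bound (x : nat -> R) (n : nat) (c : R) :
  0 <= c <= 12 / INR n ->
  x n = - c * sum_f_R0 (fun k => a k * x (n - 4 - k)%nat) (Nat.min (n - 4) 17) ->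
  Rabs (x n) <= 12 / INR n * sum_f_R0 (fun k => Rabs (a k) * Rabs (x (n - 4 - k)%nat)) (Nat.min (n - 4) 17).
Proof.
  intros Hc E. rewrite E, Rabs_mult, Rabs_Ropp, Rabs_pos_eq by lra.
  apply Rmult_le_compat. lra. apply Rabs_pos. lra.
  eapply Rle_trans. apply sum_f_R0_triangle. right. apply sum_eq. intros; apply Rabs_mult.
Qed.

Lemma Ent_A : Ent A.
Proof.
  apply (Ent_rec A 12 8). lra. lia. intros n Hn.
  replace n with (4 + (n - 4))%nat by lia.
  apply (rec_bound A _ (12 / (INR (4 + (n - 4)) * (INR (4 + (n - 4)) + 7)))).
  2: apply A_rec.
  set (m := INR (4 + (n - 4))).
  assert (Hm : 8 <= m). { unfold m. replace 8 with (INR 8) by (simpl; lra). apply le_INR. lia. }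
  split. apply Rdiv_le_0_compat; nra.
  unfold Rdiv. apply Rmult_le_compat_l. lra.
  apply Rinv_le_contravar. lra. nra.
Qed.

Lemma Ent_B : Ent B.
Proof.
  apply (Ent_rec B 12 8). lra. lia. intros n Hn.
  replace n with (4 + (n - 4))%nat by lia.
  apply (rec_bound B _ (12 / (INR (4 + (n - 4)) * (INR (4 + (n - 4)) - 7)))).
  2: apply B_rec; lia.
  set (m := INR (4 + (n - 4))).
  assert (Hm : 8 <= m). { unfold m. replace 8 with (INR 8) by (simpl; lra). apply le_INR. lia. }
  split. apply Rdiv_le_0_compat; nra.
  unfold Rdiv. apply Rmult_le_compat_l. lra.
  apply Rinv_le_contravar. lra. nra.
Qed.

Lemma A0 : A 0 = 1. Proof. reflexivity. Qed.
Lemma A1 : A 1 = 0. Proof. reflexivity. Qed.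
Lemma A2 : A 2 = 0. Proof. reflexivity. Qed.
Lemma A3 : A 3 = 0. Proof. reflexivity. Qed.
Lemma B0 : B 0 = 1. Proof. reflexivity. Qed.
Lemma B1 : B 1 = 0. Proof. reflexivity. Qed.
Lemma B2 : B 2 = 0. Proof. reflexivity. Qed.
Lemma B3 : B 3 = 0. Proof. reflexivity. Qed.
Lemma B7 : B 7 = 0. Proof. reflexivity. Qed.
Lemma a3 : a 3 = 0. Proof. reflexivity. Qed.

Lemma Hrec_A n : INR (S n) * (INR n + 8) * A (S n) + 12 * shiftk 3 (convN 17 A) n = 0.
Proof.
  unfold shiftk. destruct (Nat.leb 3 n) eqn:E.
  - apply Nat.leb_le in E. unfold convN. rewrite sum_trunc.
    replace (S n) with (4 + (n - 3))%nat by lia. rewrite A_rec.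
    replace (4 + (n - 3) - 4)%nat with (n - 3)%nat by lia.
    rewrite plus_INR. replace (INR 4) with 4 by (simpl; lra).
    replace (n - 3 - 0)%nat with (n - 3)%nat by lia.
    assert (INR n = INR (n - 3) + 3) by (rewrite minus_INR by lia; simpl; lra).
    assert (0 <= INR (n - 3)) by apply pos_INR.
    rewrite H. field. lra.
  - apply Nat.leb_gt in E. destruct n as [|[|[|n]]]; try lia.
    + rewrite A1. ring.
    + rewrite A2. ring.
    + rewrite A3. ring.
Qed.

Lemma Hrec_B n : INR (S n) * (INR n + -6) * B (S n) + 12 * shiftk 3 (convN 17 B) n = 0.
Proof.
  unfold shiftk. destruct (Nat.leb 3 n) eqn:E.
  - apply Nat.leb_le in E. unfold convN. rewrite sum_trunc.
    destruct (Nat.eq_dec n 6) as [->|Hn6].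
    + rewrite B7. simpl. rewrite B0, B1, B2, B3, a3. ring.
    + replace (S n) with (4 + (n - 3))%nat by lia. rewrite B_rec by lia.
      replace (4 + (n - 3) - 4)%nat with (n - 3)%nat by lia.
      rewrite plus_INR. replace (INR 4) with 4 by (simpl; lra).
      assert (INR n = INR (n - 3) + 3) by (rewrite minus_INR by lia; simpl; lra).
      assert (0 <= INR (n - 3)) by apply pos_INR.
      assert (INR (n - 3) <> 3).
      { intros Hc. apply Hn6. replace 3 with (INR 3) in Hc by (simpl; lra).
        apply INR_eq in Hc. lia. }
      rewrite H. field. split; lra.
  - apply Nat.leb_gt in E. destruct n as [|[|[|n]]]; try lia.
    + rewrite B1. ring.
    + rewrite B2. ring.
    + rewrite B3. ring.
Qed.

Notation D f z l := (@is_derive C_AbsRing (AbsRing_NormedModule C_AbsRing) f z l).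

Lemma toK f (z l : C) : @is_derive C_AbsRing C_NormedModule f z l -> D f z l.
Proof. intros [_ Hd]. split. apply is_linear_scal_l. intros x Hx eps. exact (Hd x Hx eps). Qed.
Lemma toV f (z l : C) : D f z l -> @is_derive C_AbsRing C_NormedModule f z l.
Proof. intros [_ Hd]. split. apply (@is_linear_scal_l C_AbsRing C_NormedModule).
  intros x Hx eps. exact (Hd x Hx eps). Qed.

Ltac cring := match goal with |- @eq _ ?x ?y => change (@eq C x y) end; ring.
Ltac cfield := match goal with |- @eq _ ?x ?y => change (@eq C x y) end; field.

Lemma D_eq f (z l l' : C) : D f z l -> l = l' -> D f z l'.
Proof. intros H E. subst. exact H. Qed.
Lemma D_ext f g (z l : C) : (forall w, f w = g w) -> D f z l -> D g z l.
Proof. intros E H. exact (is_derive_ext f g z l E H). Qed.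
Lemma D_mult f g (z lf lg : C) : D f z lf -> D g z lg ->
  D (fun w => Cmult (f w) (g w)) z (Cplus (Cmult lf (g z)) (Cmult (f z) lg)).
Proof. intros H1 H2. exact (is_derive_mult f g z lf lg H1 H2 Cmult_comm). Qed.
Lemma D_plus f g (z lf lg : C) : D f z lf -> D g z lg ->
  D (fun w => Cplus (f w) (g w)) z (Cplus lf lg).
Proof. intros H1 H2. exact (is_derive_plus f g z lf lg H1 H2). Qed.
Lemma D_const (k z : C) : D (fun _ => k) z (RtoC 0).
Proof. exact (@is_derive_const C_AbsRing (AbsRing_NormedModule C_AbsRing) k z). Qed.
Lemma D_id (z : C) : D (fun w => w) z (RtoC 1).
Proof. exact (is_derive_id z). Qed.
Lemma D_comp f g (z df dg : C) : D f (g z) df -> D g z dg -> D (fun w => f (g w)) z (Cmult dg df).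
Proof. intros H1 H2. exact (is_derive_comp f g z df dg H1 H2). Qed.
Lemma D_cmult (k : C) f (z l : C) : D f z l -> D (fun w => Cmult k (f w)) z (Cmult k l).
Proof. intros H. eapply D_eq. apply (D_mult (fun _ => k) f). apply D_const. exact H. simpl. ring. Qed.

Lemma D_pow n (z : C) : D (fun w => Cpow w n) z (Cmult (RtoC (INR n)) (Cpow z (pred n))).
Proof.
  induction n.
  - apply (D_ext (fun _ => RtoC 1)). intros w; reflexivity.
    eapply D_eq. apply D_const. change (INR 0) with 0. cring.
  - apply (D_ext (fun w => Cmult w (Cpow w n))). intros w; reflexivity.
    eapply D_eq. apply (D_mult (fun w => w) (fun w => Cpow w n)). apply D_id. exact IHn.
    destruct n. change (INR 1) with 1. change (INR 0) with 0. simpl pred.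
    change (Cpow z 0) with (RtoC 1). cring.
    rewrite (S_INR (S n)), RtoC_plus. change (pred (S (S n))) with (S n). change (pred (S n)) with n.
    change (Cpow z (S n)) with (Cmult z (Cpow z n)). cring.
Qed.

Lemma D_PS c (z : C) : Ent c -> D (PS c) z (PS (dc c) z).
Proof. intros Hc. apply toK. apply PS_derive. exact Hc. Qed.

Lemma D_inv (z : C) : z <> RtoC 0 -> D Cinv z (Copp (Cinv (Cmult z z))).
Proof.
  intros Hz. split. apply is_linear_scal_l.
  intros x Hx. apply (@is_filter_lim_locally_unique C_AbsRing (AbsRing_NormedModule C_AbsRing)) in Hx. subst x.
  intros eps.
  assert (Hm : 0 < Cmod z) by (apply Cmod_gt_0; exact Hz).
  set (m := Cmod z) in *.
  assert (Hdel : 0 < Rmin (m / 2) (eps * (m * m * m) / 2)).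
  { apply Rmin_pos. lra. apply Rdiv_lt_0_compat; [| lra]. apply Rmult_lt_0_compat. apply cond_pos.
    apply Rmult_lt_0_compat; [apply Rmult_lt_0_compat|]; lra. }
  exists (mkposreal _ Hdel). intros w Hw.
  change (Cmod (Cminus w z) < Rmin (m / 2) (eps * (m * m * m) / 2)) in Hw.
  change (Cmod (Cminus (Cminus (Cinv w) (Cinv z)) (Cmult (Cminus w z) (Copp (Cinv (Cmult z z)))))
          <= eps * Cmod (Cminus w z)).
  set (d := Cmod (Cminus w z)) in *.
  assert (Hd0 : 0 <= d) by apply Cmod_ge_0.
  assert (Hd1 : d < m / 2) by (eapply Rlt_le_trans; [exact Hw| apply Rmin_l]).
  assert (Hd2 : d <= eps * (m * m * m) / 2) by (left; eapply Rlt_le_trans; [exact Hw| apply Rmin_r]).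
  assert (Hwm : m / 2 <= Cmod w).
  { assert (m <= Cmod w + d).
    { unfold m, d. replace z with (Cplus w (Copp (Cminus w z))) at 1 by ring.
      eapply Rle_trans. apply Cmod_triangle. rewrite Cmod_opp. lra. }
    lra. }
  assert (Hw0 : w <> RtoC 0).
  { intros E. rewrite E, Cmod_0 in Hwm. lra. }
  replace (Cminus (Cminus (Cinv w) (Cinv z)) (Cmult (Cminus w z) (Copp (Cinv (Cmult z z)))))
    with (Cmult (Cmult (Cminus w z) (Cminus w z)) (Cinv (Cmult w (Cmult z z))))
    by (field; split; auto).
  rewrite Cmod_mult, Cmod_mult, Cmod_inv, !Cmod_mult.
  2:{ intros E. apply (f_equal Cmod) in E. rewrite !Cmod_mult, Cmod_0 in E. fold m in E.
      assert (0 < Cmod w) by (clear - Hwm Hm; unfold m in *; lra).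
      assert (0 < Cmod w * (m * m)) by (apply Rmult_lt_0_compat; nra). lra. }
  fold d. fold m.
  assert (0 < Cmod w * (m * m)) by (apply Rmult_lt_0_compat; nra).
  apply (Rmult_le_reg_r (Cmod w * (m * m))). exact H.
  replace (d * d * / (Cmod w * (m * m)) * (Cmod w * (m * m))) with (d * d) by (field; nra).
  assert (d * d <= d * (eps * (m * m * m) / 2)) by (apply Rmult_le_compat_l; lra).
  assert (eps * d * (m * m * m) / 2 <= eps * d * (Cmod w * (m * m))).
  { assert (0 <= eps * d) by (apply Rmult_le_pos; [left; apply cond_pos| lra]).
    assert (m * m * m / 2 <= Cmod w * (m * m)) by nra. nra. }
  nra.
Qed.


Definition I3 (w : C) : C := Cinv (Cpow w 3).
Definition I3d (w : C) : C := Cmult (RtoC (-3)) (Cinv (Cpow w 4)).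
Definition I3dd (w : C) : C := Cmult (RtoC 12) (Cinv (Cpow w 5)).

Definition G1d (w : C) : C :=
  Cplus (Cmult (RtoC 4) (Cmult (Cpow w 3) (PS A w))) (Cmult (Cpow w 4) (PS (dc A) w)).
Definition G1dd (w : C) : C :=
  Cplus (Cplus (Cmult (RtoC 12) (Cmult (Cpow w 2) (PS A w)))
               (Cmult (RtoC 8) (Cmult (Cpow w 3) (PS (dc A) w))))
        (Cmult (Cpow w 4) (PS (dc (dc A)) w)).
Definition G2d (w : C) : C :=
  Cplus (Cmult (I3d w) (PS B w)) (Cmult (I3 w) (PS (dc B) w)).
Definition G2dd (w : C) : C :=
  Cplus (Cplus (Cmult (I3dd w) (PS B w)) (Cmult (RtoC 2) (Cmult (I3d w) (PS (dc B) w))))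
        (Cmult (I3 w) (PS (dc (dc B)) w)).

Lemma INR4 : INR 4 = 4. Proof. simpl. lra. Qed.
Lemma INR3 : INR 3 = 3. Proof. simpl. lra. Qed.

Lemma G1_ser w : @is_series C_AbsRing C_NormedModule (G1_term w) (Cmult (Cpow w 4) (PS A w)).
Proof.
  eapply is_series_ext; [| exact (is_series_Cmult_l _ _ (Cpow w 4) (Ent_series A w Ent_A))].
  intros n. change (Cmult (Cpow w 4) (term A w n) = G1_term w n).
  unfold term, G1_term. rewrite Cpow_add_r. ring.
Qed.
Lemma G1_eq w : G1 w = Cmult (Cpow w 4) (PS A w).
Proof. apply CSeries_eq, G1_ser. Qed.

Lemma G2_ser w : @is_series C_AbsRing C_NormedModule (G2_term w) (Cmult (I3 w) (PS B w)).
Proof.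
  eapply is_series_ext; [| exact (is_series_Cmult_l _ _ (I3 w) (Ent_series B w Ent_B))].
  intros n. change (Cmult (I3 w) (term B w n) = G2_term w n).
  unfold term, G2_term, I3, Cdiv. ring.
Qed.
Lemma G2_eq w : G2 w = Cmult (I3 w) (PS B w).
Proof. apply CSeries_eq, G2_ser. Qed.

Lemma Cpow_nz' (w : C) n : w <> RtoC 0 -> Cpow w n <> RtoC 0.
Proof. apply Cpow_nz. Qed.

Lemma D_G1 w : D G1 w (G1d w).
Proof.
  apply (D_ext (fun w => Cmult (Cpow w 4) (PS A w))). intros; symmetry; apply G1_eq.
  eapply D_eq. apply (D_mult (fun w => Cpow w 4) (PS A)). apply D_pow. apply D_PS, Ent_A.
  unfold G1d. rewrite INR4. simpl pred. cring.
Qed.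

Lemma D_G1d w : D G1d w (G1dd w).
Proof.
  eapply D_eq. unfold G1d.
  apply (D_plus (fun w => Cmult (RtoC 4) (Cmult (Cpow w 3) (PS A w)))
                (fun w => Cmult (Cpow w 4) (PS (dc A) w))).
  apply D_cmult. apply (D_mult (fun w => Cpow w 3) (PS A)). apply D_pow. apply D_PS, Ent_A.
  apply (D_mult (fun w => Cpow w 4) (PS (dc A))). apply D_pow. apply D_PS, Ent_dc, Ent_A.
  unfold G1dd. rewrite INR4, INR3. simpl pred. cring.
Qed.

Lemma D_I3 w : w <> RtoC 0 -> D I3 w (I3d w).
Proof.
  intros Hw. eapply D_eq. unfold I3.
  apply (D_comp Cinv (fun w => Cpow w 3)). apply D_inv. apply Cpow_nz, Hw. apply D_pow.
  unfold I3d. rewrite INR3. simpl pred. cfield.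
  all: repeat split; try apply Cpow_nz; auto.
Qed.

Lemma D_I3d w : w <> RtoC 0 -> D I3d w (I3dd w).
Proof.
  intros Hw. eapply D_eq. unfold I3d.
  apply D_cmult. apply (D_comp Cinv (fun w => Cpow w 4)). apply D_inv. apply Cpow_nz, Hw. apply D_pow.
  unfold I3dd. rewrite INR4. simpl pred. cfield.
  all: repeat split; try apply Cpow_nz; auto.
Qed.

Lemma D_G2 w : w <> RtoC 0 -> D G2 w (G2d w).
Proof.
  intros Hw.
  apply (D_ext (fun w => Cmult (I3 w) (PS B w))). intros; symmetry; apply G2_eq.
  eapply D_eq. apply (D_mult I3 (PS B)). apply D_I3, Hw. apply D_PS, Ent_B.
  unfold G2d. cring.
Qed.

Lemma D_G2d w : w <> RtoC 0 -> D G2d w (G2dd w).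
Proof.
  intros Hw. eapply D_eq. unfold G2d.
  apply (D_plus (fun w => Cmult (I3d w) (PS B w)) (fun w => Cmult (I3 w) (PS (dc B) w))).
  apply (D_mult I3d (PS B)). apply D_I3d, Hw. apply D_PS, Ent_B.
  apply (D_mult I3 (PS (dc B))). apply D_I3, Hw. apply D_PS, Ent_dc, Ent_B.
  unfold G2dd. cring.
Qed.

Lemma CD1 w : C_derive G1 w = G1d w.
Proof. apply is_C_derive_unique, toV, D_G1. Qed.

Lemma CD2 w : w <> RtoC 0 -> C_derive G2 w = G2d w.
Proof. intros Hw. apply is_C_derive_unique, toV, D_G2, Hw. Qed.

Lemma nz_near (z w : C) : Cmod (Cminus w z) < Cmod z -> w <> RtoC 0.
Proof. intros H E. subst. replace (Cminus (RtoC 0) z) with (Copp z) in H by cring.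
  rewrite Cmod_opp in H. lra. Qed.

Lemma ode_G1 z : z <> RtoC 0 ->
  Cplus (G1dd z) (Cmult (RtoC 12) (Cmult (Y0 z) (G1 z))) = RtoC 0.
Proof.
  intros Hz. pose proof (ode_id A 8 z Ent_A Hrec_A) as H.
  rewrite G1_eq. unfold G1dd, Y0.
  transitivity (Cmult (Cpow z 3)
     (Cplus (Cplus (Cmult (RtoC 8) (PS (dc A) z)) (Cmult z (PS (dc (dc A)) z)))
        (Cmult (RtoC 12) (Cmult (Cpow z 3) (Cmult (P z) (PS A z)))))).
  - cfield. all: repeat split; try apply Cpow_nz; auto.
  - rewrite H. cring.
Qed.

Lemma ode_G2 z : z <> RtoC 0 ->
  Cplus (G2dd z) (Cmult (RtoC 12) (Cmult (Y0 z) (G2 z))) = RtoC 0.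
Proof.
  intros Hz. pose proof (ode_id B (-6) z Ent_B Hrec_B) as H.
  rewrite G2_eq. unfold G2dd, Y0, I3, I3d, I3dd.
  transitivity (Cmult (Cinv (Cpow z 4))
     (Cplus (Cplus (Cmult (RtoC (-6)) (PS (dc B) z)) (Cmult z (PS (dc (dc B)) z)))
        (Cmult (RtoC 12) (Cmult (Cpow z 3) (Cmult (P z) (PS B z)))))).
  - cfield. repeat split; try apply Cpow_nz; auto.
  - rewrite H. cring.
Qed.

Lemma solves_G1 z : z <> RtoC 0 -> solves_at G1 z.
Proof.
  intros Hz. split; [| split].
  - exists (mkposreal 1 Rlt_0_1). intros w _. rewrite CD1. apply toV, D_G1.
  - assert (E : C_derive (C_derive G1) z = G1dd z).
    { apply is_C_derive_unique, toV. apply (D_ext G1d). intros; symmetry; apply CD1. apply D_G1d. }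
    rewrite E. apply toV. apply (D_ext G1d). intros; symmetry; apply CD1. apply D_G1d.
  - assert (E : C_derive (C_derive G1) z = G1dd z).
    { apply is_C_derive_unique, toV. apply (D_ext G1d). intros; symmetry; apply CD1. apply D_G1d. }
    rewrite E. apply ode_G1, Hz.
Qed.

Lemma loc_nz (z : C) : z <> RtoC 0 ->
  @locally (AbsRing_UniformSpace C_AbsRing) z (fun w => G2d w = C_derive G2 w).
Proof.
  intros Hz. assert (Hm : 0 < Cmod z) by (apply Cmod_gt_0, Hz).
  exists (mkposreal _ Hm). intros w Hw. symmetry. apply CD2. apply (nz_near z). exact Hw.
Qed.

Lemma D_ext_loc f g (z l : C) :
  @locally (AbsRing_UniformSpace C_AbsRing) z (fun t => f t = g t) -> D f z l -> D g z l.
Proof. exact (@is_derive_ext_loc C_AbsRing (AbsRing_NormedModule C_AbsRing) f g z l). Qed.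

Lemma solves_G2 z : z <> RtoC 0 -> solves_at G2 z.
Proof.
  intros Hz. assert (Hm : 0 < Cmod z) by (apply Cmod_gt_0, Hz).
  assert (E : C_derive (C_derive G2) z = G2dd z).
  { apply is_C_derive_unique, toV. apply (D_ext_loc G2d). apply loc_nz, Hz. apply D_G2d, Hz. }
  split; [| split].
  - exists (mkposreal _ Hm). intros w Hw. assert (Hw0 : w <> RtoC 0) by (apply (nz_near z); exact Hw).
    rewrite CD2 by exact Hw0. apply toV, D_G2, Hw0.
  - rewrite E. apply toV. apply (D_ext_loc G2d). apply loc_nz, Hz. apply D_G2d, Hz.
  - rewrite E. apply ode_G2, Hz.
Qed.

Definition hW (w : C) : C :=
  Cplus (Cmult (RtoC (-7)) (Cmult (PS A w) (PS B w)))
        (Cmult w (Cplus (Cmult (PS A w) (PS (dc B) w))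
                        (Cmult (RtoC (-1)) (Cmult (PS B w) (PS (dc A) w))))).

Lemma D_hW w : D hW w (RtoC 0).
Proof.
  pose proof (ode_id A 8 w Ent_A Hrec_A) as HA.
  pose proof (ode_id B (-6) w Ent_B Hrec_B) as HB.
  eapply D_eq. unfold hW.
  apply (D_plus (fun w => Cmult (RtoC (-7)) (Cmult (PS A w) (PS B w)))
     (fun w => Cmult w (Cplus (Cmult (PS A w) (PS (dc B) w))
                        (Cmult (RtoC (-1)) (Cmult (PS B w) (PS (dc A) w)))))).
  apply D_cmult. apply (D_mult (PS A) (PS B)); apply D_PS; [apply Ent_A | apply Ent_B].
  apply (D_mult (fun w => w) (fun w => Cplus (Cmult (PS A w) (PS (dc B) w))
                        (Cmult (RtoC (-1)) (Cmult (PS B w) (PS (dc A) w))))).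
  apply D_id.
  apply (D_plus (fun w => Cmult (PS A w) (PS (dc B) w))
                (fun w => Cmult (RtoC (-1)) (Cmult (PS B w) (PS (dc A) w)))).
  apply (D_mult (PS A) (PS (dc B))); apply D_PS; [apply Ent_A | apply Ent_dc, Ent_B].
  apply D_cmult. apply (D_mult (PS B) (PS (dc A))); apply D_PS; [apply Ent_B | apply Ent_dc, Ent_A].
  set (X := Cplus (Cplus (Cmult (RtoC 8) (PS (dc A) w)) (Cmult w (PS (dc (dc A)) w)))
        (Cmult (RtoC 12) (Cmult (Cpow w 3) (Cmult (P w) (PS A w))))) in HA.
  set (Y := Cplus (Cplus (Cmult (RtoC (-6)) (PS (dc B) w)) (Cmult w (PS (dc (dc B)) w)))
        (Cmult (RtoC 12) (Cmult (Cpow w 3) (Cmult (P w) (PS B w))))) in HB.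
  transitivity (Cminus (Cmult (PS A w) Y) (Cmult (PS B w) X)).
  - unfold X, Y. cring.
  - rewrite HA, HB. cring.
Qed.

Lemma real_chain (f : C -> C) (z l : C) (t : R) (p : C -> R) :
  (forall u, Rabs (p u) <= Cmod u) ->
  (forall u v w (k : R), p (Cminus (Cminus u v) (Cmult (RtoC k) w)) = p u - p v - k * p w) ->
  D f (Cmult (RtoC t) z) l ->
  is_derive (fun s : R => p (f (Cmult (RtoC s) z))) t (p (Cmult l z)).
Proof.
  intros Hp Hlin [_ Hd]. split. apply is_linear_scal_l.
  intros x Hx. apply (@is_filter_lim_locally_unique R_AbsRing (AbsRing_NormedModule R_AbsRing)) in Hx.
  subst x. intros eps.
  assert (Hl : is_filter_lim (@locally (AbsRing_UniformSpace C_AbsRing) (Cmult (RtoC t) z)) (Cmult (RtoC t) z))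
    by (intros P HP; exact HP).
  assert (Hz := Cmod_ge_0 z).
  assert (He : 0 < eps / (Cmod z + 1)) by (apply Rdiv_lt_0_compat; [apply cond_pos| lra]).
  destruct (Hd _ Hl (mkposreal _ He)) as [del Hdel].
  assert (Hd' : 0 < del / (Cmod z + 1)) by (apply Rdiv_lt_0_compat; [apply cond_pos| lra]).
  exists (mkposreal _ Hd'). intros s Hs.
  change (Rabs (s - t) < del / (Cmod z + 1)) in Hs.
  assert (Hsz : Cminus (Cmult (RtoC s) z) (Cmult (RtoC t) z) = Cmult (RtoC (s - t)) z).
  { rewrite RtoC_minus. cring. }
  assert (Hst : Rabs (s - t) * Cmod z <= Rabs (s - t) * (Cmod z + 1)).
  { apply Rmult_le_compat_l. apply Rabs_pos. lra. }
  assert (Hb : Rabs (s - t) * (Cmod z + 1) < del).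
  { apply (Rmult_lt_compat_r (Cmod z + 1)) in Hs; [| lra].
    replace (del / (Cmod z + 1) * (Cmod z + 1)) with (pos del) in Hs by (field; lra). exact Hs. }
  specialize (Hdel (Cmult (RtoC s) z)).
  assert (Hball : Cmod (Cminus (Cmult (RtoC s) z) (Cmult (RtoC t) z)) < del).
  { rewrite Hsz, Cmod_mult, Cmod_R. lra. }
  specialize (Hdel Hball).
  change (Cmod (Cminus (Cminus (f (Cmult (RtoC s) z)) (f (Cmult (RtoC t) z)))
            (Cmult (Cminus (Cmult (RtoC s) z) (Cmult (RtoC t) z)) l))
          <= eps / (Cmod z + 1) * Cmod (Cminus (Cmult (RtoC s) z) (Cmult (RtoC t) z))) in Hdel.
  change (Rabs (p (f (Cmult (RtoC s) z)) - p (f (Cmult (RtoC t) z)) - (s - t) * p (Cmult l z))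
          <= eps * Rabs (s - t)).
  rewrite Hsz, Cmod_mult, Cmod_R in Hdel.
  replace (p (f (Cmult (RtoC s) z)) - p (f (Cmult (RtoC t) z)) - (s - t) * p (Cmult l z))
    with (p (Cminus (Cminus (f (Cmult (RtoC s) z)) (f (Cmult (RtoC t) z)))
            (Cmult (Cmult (RtoC (s - t)) z) l))).
  2:{ replace (Cmult (Cmult (RtoC (s - t)) z) l) with (Cmult (RtoC (s - t)) (Cmult l z)) by cring.
      apply Hlin. }
  eapply Rle_trans. apply Hp. eapply Rle_trans. exact Hdel.
  assert (0 <= Rabs (s - t)) by apply Rabs_pos.
  replace (eps / (Cmod z + 1) * (Rabs (s - t) * Cmod z))
    with (eps * Rabs (s - t) * (Cmod z / (Cmod z + 1))) by (field; lra).
  assert (Cmod z / (Cmod z + 1) <= 1).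
  { apply (Rmult_le_reg_r (Cmod z + 1)). lra. replace (Cmod z / (Cmod z + 1) * (Cmod z + 1)) with (Cmod z) by (field; lra). lra. }
  assert (0 <= eps * Rabs (s - t)) by (apply Rmult_le_pos; [left; apply cond_pos | lra]).
  assert (0 <= Cmod z / (Cmod z + 1)) by (apply Rdiv_le_0_compat; lra).
  nra.
Qed.

Lemma const_01 (g : R -> R) : (forall t, is_derive g t 0) -> g 1 = g 0.
Proof.
  intros H.
  destruct (MVT_gen g 0 1 (fun _ => 0)) as [c [_ Hc]].
  - intros x _. apply H.
  - intros x _. apply continuity_pt_filterlim. apply (ex_derive_continuous g x). exists 0. apply H.
  - lra.
Qed.

Lemma hW_const z : hW z = hW (RtoC 0).
Proof.
  assert (Hfst : fst (hW z) = fst (hW (RtoC 0))).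
  { pose proof (const_01 (fun s => fst (hW (Cmult (RtoC s) z)))) as H.
    cbv beta in H. replace (Cmult (RtoC 1) z) with z in H by cring.
    replace (Cmult (RtoC 0) z) with (RtoC 0) in H by cring. apply H.
    intros t. replace 0 with (fst (Cmult (RtoC 0) z)) by (simpl; ring).
    apply real_chain.
    - intros u. apply re_le_Cmod.
    - intros u v w k. simpl. ring.
    - apply D_hW. }
  assert (Hsnd : snd (hW z) = snd (hW (RtoC 0))).
  { pose proof (const_01 (fun s => snd (hW (Cmult (RtoC s) z)))) as H.
    cbv beta in H. replace (Cmult (RtoC 1) z) with z in H by cring.
    replace (Cmult (RtoC 0) z) with (RtoC 0) in H by cring. apply H.
    intros t. replace 0 with (snd (Cmult (RtoC 0) z)) by (simpl; ring).
    apply real_chain.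
    - intros u. pose proof (Rmax_Cmod u). pose proof (Rmax_r (Rabs (fst u)) (Rabs (snd u))). lra.
    - intros u v w k. simpl. ring.
    - apply D_hW. }
  apply injective_projections; assumption.
Qed.

Lemma hW_val z : hW z = RtoC (-7).
Proof.
  rewrite hW_const. unfold hW. rewrite !PS_at0 by (try apply Ent_A; try apply Ent_B; try apply Ent_dc; try apply Ent_A; apply Ent_B).
  rewrite A0, B0. cring.
Qed.

Lemma wronsk z : z <> RtoC 0 ->
  Cminus (Cmult (G1 z) (G2d z)) (Cmult (G2 z) (G1d z)) = RtoC (-7).
Proof.
  intros Hz. rewrite <- (hW_val z). rewrite G1_eq, G2_eq. unfold G1d, G2d, hW, I3, I3d.
  cfield. all: repeat split; try apply Cpow_nz; auto.
Qed.

Lemma Cmod_le_sum (u : C) : Cmod u <= Rabs (fst u) + Rabs (snd u).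
Proof.
  unfold Cmod. rewrite <- (sqrt_pow2 (Rabs (fst u) + Rabs (snd u))).
  2:{ pose proof (Rabs_pos (fst u)). pose proof (Rabs_pos (snd u)). lra. }
  apply sqrt_le_1_alt.
  rewrite <- (pow2_abs (fst u)), <- (pow2_abs (snd u)).
  pose proof (Rabs_pos (fst u)). pose proof (Rabs_pos (snd u)). nra.
Qed.

Lemma r_pos : 0 < r. Proof. unfold r. lra. Qed.

Lemma circle_D F (L : C) : D F (RtoC r) L -> (forall w, Cmod w = r -> F w = RtoC 0) -> L = RtoC 0.
Proof.
  intros [_ Hd] HF.
  assert (Hl : is_filter_lim (@locally (AbsRing_UniformSpace C_AbsRing) (RtoC r)) (RtoC r))
    by (intros P HP; exact HP).
  apply Cmod_eq_0. apply Rle_antisym; [| apply Cmod_ge_0].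
  apply Rnot_lt_le. intros HL.
  assert (He : 0 < Cmod L / 2) by lra.
  destruct (Hd _ Hl (mkposreal _ He)) as [del Hdel].
  assert (Hdp := cond_pos del).
  set (s := Rmin (1/2) (del / 4)).
  assert (Hs0 : 0 < s) by (unfold s; apply Rmin_pos; lra).
  assert (Hs1 : s <= 1/2) by apply Rmin_l.
  assert (Hs2 : s <= del / 4) by apply Rmin_r.
  assert (Hr := r_pos).
  assert (Hq : 0 < 1 + s ^ 2) by (pose proof (pow2_ge_0 s); lra).
  set (w := (r * (1 - s ^ 2) / (1 + s ^ 2), 2 * r * s / (1 + s ^ 2)) : C).
  assert (Hw : Cmod w = r).
  { unfold Cmod, w. cbn [fst snd].
    replace ((r * (1 - s ^ 2) / (1 + s ^ 2)) ^ 2 + (2 * r * s / (1 + s ^ 2)) ^ 2) with (r ^ 2)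
      by (field; lra).
    apply sqrt_pow2. lra. }
  assert (Hr0 : Cmod (RtoC r) = r) by (rewrite Cmod_R; apply Rabs_pos_eq; lra).
  assert (Hf : fst (Cminus w (RtoC r)) = - (2 * r * s ^ 2 / (1 + s ^ 2))).
  { unfold w. simpl. field. lra. }
  assert (Hsn : snd (Cminus w (RtoC r)) = 2 * r * s / (1 + s ^ 2)).
  { unfold w. simpl. field. lra. }
  assert (Hsp : 0 < 2 * r * s / (1 + s ^ 2)).
  { apply Rdiv_lt_0_compat; [| lra]. nra. }
  assert (Hpos : 0 < Cmod (Cminus w (RtoC r))).
  { apply Cmod_gt_0. intros E. apply (f_equal snd) in E. rewrite Hsn in E. cbv [snd RtoC] in E. lra. }
  assert (Hwr : Cmod (Cminus w (RtoC r)) < del).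
  { eapply Rle_lt_trans. apply Cmod_le_sum. rewrite Hf, Hsn, Rabs_Ropp.
    rewrite !Rabs_pos_eq.
    2:{ left; exact Hsp. }
    2:{ apply Rdiv_le_0_compat; [| lra]. pose proof (pow2_ge_0 s). nra. }
    assert (2 * r * s ^ 2 / (1 + s ^ 2) <= 2 * r * s ^ 2).
    { apply (Rmult_le_reg_r (1 + s ^ 2)). lra.
      replace (2 * r * s ^ 2 / (1 + s ^ 2) * (1 + s ^ 2)) with (2 * r * s ^ 2) by (field; lra).
      assert (0 <= r * s ^ 2 * s ^ 2) by (apply Rmult_le_pos; [apply Rmult_le_pos|]; try lra; apply pow2_ge_0).
      replace (2 * r * s ^ 2 * (1 + s ^ 2)) with (2 * r * s ^ 2 + 2 * (r * s ^ 2 * s ^ 2)) by ring. lra. }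
    assert (2 * r * s / (1 + s ^ 2) <= 2 * r * s).
    { apply (Rmult_le_reg_r (1 + s ^ 2)). lra.
      replace (2 * r * s / (1 + s ^ 2) * (1 + s ^ 2)) with (2 * r * s) by (field; lra).
      assert (0 <= r * s * s ^ 2) by (apply Rmult_le_pos; [apply Rmult_le_pos|]; try lra; apply pow2_ge_0).
      replace (2 * r * s * (1 + s ^ 2)) with (2 * r * s + 2 * (r * s * s ^ 2)) by ring. lra. }
    unfold r in *. simpl in *. nra. }
  specialize (Hdel w Hwr).
  change (Cmod (Cminus (Cminus (F w) (F (RtoC r))) (Cmult (Cminus w (RtoC r)) L))
          <= Cmod L / 2 * Cmod (Cminus w (RtoC r))) in Hdel.
  rewrite (HF w Hw), (HF (RtoC r) Hr0) in Hdel.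
  replace (Cminus (Cminus (RtoC 0) (RtoC 0)) (Cmult (Cminus w (RtoC r)) L))
    with (Copp (Cmult (Cminus w (RtoC r)) L)) in Hdel by cring.
  rewrite Cmod_opp, Cmod_mult in Hdel. nra.
Qed.

Lemma neg7_nz : RtoC (-7) <> RtoC 0.
Proof. intros E. apply (f_equal fst) in E. simpl in E. lra. Qed.

Theorem lemma6p7 :
  (forall z : C, Cmod z = r ->
     @is_series C_AbsRing C_NormedModule (G1_term z) (G1 z) /\
     @is_series C_AbsRing C_NormedModule (G2_term z) (G2 z) /\
     solves_at G1 z /\ solves_at G2 z /\
     Cminus (Cmult (G1 z) (C_derive G2 z)) (Cmult (G2 z) (C_derive G1 z)) = RtoC (-7)) /\
  (forall c1 c2 : C,
     (forall z : C, Cmod z = r -> Cplus (Cmult c1 (G1 z)) (Cmult c2 (G2 z)) = RtoC 0) ->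
     c1 = RtoC 0 /\ c2 = RtoC 0).
Proof.
  split.
  - intros z Hz.
    assert (Hz0 : z <> RtoC 0).
    { intros E. rewrite E, Cmod_0 in Hz. pose proof r_pos. lra. }
    split; [| split; [| split; [| split]]].
    + rewrite G1_eq. apply G1_ser.
    + rewrite G2_eq. apply G2_ser.
    + apply solves_G1, Hz0.
    + apply solves_G2, Hz0.
    + rewrite CD1, CD2 by exact Hz0. apply wronsk, Hz0.
  - intros c1 c2 H.
    assert (Hr := r_pos).
    assert (Hr0 : Cmod (RtoC r) = r) by (rewrite Cmod_R; apply Rabs_pos_eq; lra).
    assert (Hnz : RtoC r <> RtoC 0).
    { intros E. rewrite E, Cmod_0 in Hr0. lra. }
    pose proof (H _ Hr0) as HF.
    assert (HD : D (fun w => Cplus (Cmult c1 (G1 w)) (Cmult c2 (G2 w))) (RtoC r)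
                   (Cplus (Cmult c1 (G1d (RtoC r))) (Cmult c2 (G2d (RtoC r))))).
    { apply (D_plus (fun w => Cmult c1 (G1 w)) (fun w => Cmult c2 (G2 w))).
      apply D_cmult, D_G1. apply D_cmult, D_G2, Hnz. }
    pose proof (circle_D _ _ HD H) as HF'.
    pose proof (wronsk _ Hnz) as HW.
    set (g1 := G1 (RtoC r)) in *. set (g2 := G2 (RtoC r)) in *.
    set (d1 := G1d (RtoC r)) in *. set (d2 := G2d (RtoC r)) in *.
    assert (E1 : Cmult c1 (RtoC (-7)) = RtoC 0).
    { rewrite <- HW.
      transitivity (Cminus (Cmult d2 (Cplus (Cmult c1 g1) (Cmult c2 g2)))
                           (Cmult g2 (Cplus (Cmult c1 d1) (Cmult c2 d2)))).
      cring. rewrite HF, HF'. cring. }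
    assert (E2 : Cmult c2 (RtoC (-7)) = RtoC 0).
    { rewrite <- HW.
      transitivity (Cminus (Cmult g1 (Cplus (Cmult c1 d1) (Cmult c2 d2)))
                           (Cmult d1 (Cplus (Cmult c1 g1) (Cmult c2 g2)))).
      cring. rewrite HF, HF'. cring. }
    split.
    + transitivity (Cmult (Cmult c1 (RtoC (-7))) (Cinv (RtoC (-7)))).
      { cfield; apply neg7_nz. } rewrite E1. cring.
    + transitivity (Cmult (Cmult c2 (RtoC (-7))) (Cinv (RtoC (-7)))).
      { cfield; apply neg7_nz. } rewrite E2. cring.
Qed.
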